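(* Let $T$ be a complete first-order theory, $\varphi(x,y)$ a formula, $k<\omega$ and $m,n\leq\omega$. Then $T$ has a $(k,m,n)$-weave for $\varphi(x,y)$ of depth $\omega$ if and only if $T$ has a strong $(k,m,n)$-weave for $\varphi(x,y)$ of depth $\omega$.
   Context: Write $2^2=\{0,1\}^2$. A linear order $L$ is ordinal-like if it is a model of the common first-order theory of all ordinals (in the language $\{<\}$); every ordinal, in particular $\omega$ and each finite $d=\{0,\dots,d-1\}$, is ordinal-like. $(2^2)^L$ is the set of functions $L\to 2^2$. A topped initial segment of $L$ is an initial segment $D$ of $L$ such that $L\setminus D$ has a least element, denoted $\top(D)$. $(2^2)^{<L}$ is the set of functions from topped initial segments of $L$ to $2^2$. For $\tau\in(2^2)^{<L}$ and $a\in 2^2$, $\tau^\frown a$ is the function with domain $\mathrm{dom}(\tau)\cup\{\top(\mathrm{dom}\,\tau)\}$ extending $\tau$ and sending $\top(\mathrm{dom}\,\tau)$ to $a$. ''$\sigma$ extends $\tau$'' means $\tau\subseteq\sigma$ as functions. For $A,B\subseteq(2^2)^L$: - $A$ is narrowly below $B$ if there are $\tau\in(2^2)^{<L}$ and $i<2$ with every element of $A$ extending $\tau^\frown(i,0)$ and every element of $B$ extending $\tau^\frown(i,1)$; - $A$ is narrowly to the left of $B$ if there are $\tau\in(2^2)^{<L}$ and $j<2$ with every element of $A$ extending $\tau^\frown(0,j)$ and every element of $B$ extending $\tau^\frown(1,j)$; - $A$ is widely to the left of $B$ if there is $\sigma\in(2^2)^{<L}$ with every element of $A$ extending $\sigma^\frown(0,0)$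 or $\sigma^\frown(0,1)$ and every element of $B$ extending $\sigma^\frown(1,0)$ or $\sigma^\frown(1,1)$. For $n\le\omega$: the finite up-$n$-combs form the smallest class of finite subsets of $(2^2)^L$ containing all singletons and such that if $A,B$ are finite up-$n$-combs, $|A|\le n$ and $A$ is narrowly below $B$, then $A\cup B$ is a finite up-$n$-comb. Finite right-$n$-combs are defined the same way with ''narrowly to the left of'' in place of ''narrowly below''. Finite wide right-$n$-combs: smallest class containing singletons such that if $A,B$ are finite right-$n$-combs, $|A|\le n$ and $A$ is widely to the left of $B$, then $A\cup B$ is a finite wide right-$n$-comb. An (arbitrary) up-$n$-comb / right-$n$-comb / wide right-$n$-comb is a set all of whose finite subsets are finite ones of the respective kind. For $k<\omega$, $m,n\le\omega$, ordinal-like $L$ and $X\subseteq(2^2)^L$, a partial $(k,m,n)$-weave for $\varphi(x,y)$ of depth $L$ on $X$ is a family $(b_\sigma:\sigma\in X)$ of parameters (in a model of $T$) such that for every finite up-$m$-comb $C\subseteq X$ the set $\{\varphi(x,b_\sigma):\sigma\in C\}$ is $k$-inconsistent, and for every finite right-$n$-comb $C\subseteq X$ the set $\{\varphi(x,b_\sigma):\sigma\in C\}$ is consistent. It is strong if moreover $\{\varphi(x,b_\sigma):\sigma\in C\}$ is consistent for every finite wide right-$n$-comb $C\subseteq X$. A (strong) $(k,m,n)$-weave for $\varphi$ of depth $L$ is a partial (strong) one with $X=(2^2)^L$. A $(k,m,n)$-weave of depth $L$ is one for some formula. *)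

(* Defs.v *)
From Stdlib Require Import List Arith.
From Stdlib Require Fin.
Import ListNotations.
Set Implicit Arguments.

Record Language := {
  Func : Type;
  Rel : Type;
  farity : Func -> nat;
  rarity : Rel -> nat
}.

Inductive term (L : Language) : Type :=
| tvar : nat -> term L
| tapp : forall f : Func L, (Fin.t (farity L f) -> term L) -> term L.

Inductive formula (L : Language) : Type :=
| ffalse : formula L
| ftrue : formula L
| feq : term L -> term L -> formula L
| frel : forall r : Rel L, (Fin.t (rarity L r) -> term L) -> formula L
| fnot : formula L -> formula L
| fand : formula L -> formula L -> formula L
| for_ : formula L -> formula L -> formula L
| fimp : formula L -> formula L -> formula L
| fall : nat -> formula L -> formula L
| fex : nat -> formula L -> formula L.

Record Structure (L : Language) := {
  carrier :> Type;
  carrier_inh : inhabited carrier;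
  interp_f : forall f : Func L, (Fin.t (farity L f) -> carrier) -> carrier;
  interp_r : forall r : Rel L, (Fin.t (rarity L r) -> carrier) -> Prop
}.

Fixpoint eval_term {L} (M : Structure L) (e : nat -> M) (t : term L) : M :=
  match t with
  | tvar _ v => e v
  | tapp f args => interp_f M f (fun i => eval_term M e (args i))
  end.

Definition upd {A} (e : nat -> A) (v : nat) (a : A) : nat -> A :=
  fun w => if Nat.eqb w v then a else e w.

Fixpoint sat {L} (M : Structure L) (e : nat -> M) (p : formula L) : Prop :=
  match p with
  | ffalse _ => False
  | ftrue _ => True
  | feq t1 t2 => eval_term M e t1 = eval_term M e t2
  | frel r args => interp_r M r (fun i => eval_term M e (args i))
  | fnot q => ~ sat M e q
  | fand q1 q2 => sat M e q1 /\ sat M e q2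
  | for_ q1 q2 => sat M e q1 \/ sat M e q2
  | fimp q1 q2 => sat M e q1 -> sat M e q2
  | fall v q => forall a : M, sat M (upd e v a) q
  | fex v q => exists a : M, sat M (upd e v a) q
  end.

Fixpoint occurs_term {L} (v : nat) (t : term L) : Prop :=
  match t with
  | tvar _ w => w = v
  | tapp f args => exists i, occurs_term v (args i)
  end.

Fixpoint free_in {L} (v : nat) (p : formula L) : Prop :=
  match p with
  | ffalse _ | ftrue _ => False
  | feq t1 t2 => occurs_term v t1 \/ occurs_term v t2
  | frel r args => exists i, occurs_term v (args i)
  | fnot q => free_in v q
  | fand q1 q2 | for_ q1 q2 | fimp q1 q2 => free_in v q1 \/ free_in v q2
  | fall w q | fex w q => w <> v /\ free_in v q
  end.

Definition sentence {L} (p : formula L) : Prop := forall v, ~ free_in v p.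

Definition models_sentence {L} (M : Structure L) (p : formula L) : Prop :=
  forall e : nat -> M, sat M e p.

Definition is_model {L} (M : Structure L) (T : formula L -> Prop) : Prop :=
  forall p, T p -> models_sentence M p.

Definition complete_theory {L} (T : formula L -> Prop) : Prop :=
  (forall p, T p -> sentence p) /\
  (exists M : Structure L, is_model M T) /\
  (forall p, sentence p ->
     (forall M : Structure L, is_model M T -> models_sentence M p) \/
     (forall M : Structure L, is_model M T -> models_sentence M (fnot p))).

(* 2 = bool (0 = false, 1 = true); 2^2 = bool * bool.                  *)
(* Topped initial segments of omega are exactly {0,...,l-1}, with top  *)
(* l, so (2^2)^{<omega} is represented by finite sequences.            *)

Definition path := nat -> bool * bool.
Definition node := list (bool * bool).

Definition extends_cat (sigma : path) (tau : node) (a : bool * bool) : Prop :=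
  (forall i, i < length tau -> sigma i = nth i tau (false, false)) /\
  sigma (length tau) = a.

Definition pset := path -> Prop.

Definition narrowly_below (A B : pset) : Prop :=
  exists (tau : node) (i : bool),
    (forall s, A s -> extends_cat s tau (i, false)) /\
    (forall s, B s -> extends_cat s tau (i, true)).

Definition narrowly_left (A B : pset) : Prop :=
  exists (tau : node) (j : bool),
    (forall s, A s -> extends_cat s tau (false, j)) /\
    (forall s, B s -> extends_cat s tau (true, j)).

Definition widely_left (A B : pset) : Prop :=
  exists (tau : node),
    (forall s, A s -> extends_cat s tau (false, false) \/ extends_cat s tau (false, true)) /\
    (forall s, B s -> extends_cat s tau (true, false) \/ extends_cat s tau (true, true)).

Inductive natinf : Type := Fin_ (n : nat) | Omega.

Definition card_le (A : pset) (n : natinf) : Prop :=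
  match n with
  | Fin_ n => exists l : list path, length l <= n /\ forall s, A s -> In s l
  | Omega => True
  end.

Definition same_set (A B : pset) : Prop := forall s, A s <-> B s.

Inductive fin_up_comb (m : natinf) : pset -> Prop :=
| upc_single : forall (s0 : path) C, same_set C (fun s => s = s0) -> fin_up_comb m C
| upc_join : forall A B C, fin_up_comb m A -> fin_up_comb m B -> card_le A m ->
    narrowly_below A B -> same_set C (fun s => A s \/ B s) -> fin_up_comb m C.

Inductive fin_right_comb (n : natinf) : pset -> Prop :=
| rc_single : forall (s0 : path) C, same_set C (fun s => s = s0) -> fin_right_comb n C
| rc_join : forall A B C, fin_right_comb n A -> fin_right_comb n B -> card_le A n ->
    narrowly_left A B -> same_set C (fun s => A s \/ B s) -> fin_right_comb n C.

(* finite wide right-n-combs: built (as in the paper) from finite right-n-combs *)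
Inductive fin_wide_right_comb (n : natinf) : pset -> Prop :=
| wc_single : forall (s0 : path) C, same_set C (fun s => s = s0) -> fin_wide_right_comb n C
| wc_join : forall A B C, fin_right_comb n A -> fin_right_comb n B -> card_le A n ->
    widely_left A B -> same_set C (fun s => A s \/ B s) -> fin_wide_right_comb n C.

(* Instances phi(x, b): x occupies variables 0..nx-1, the parameter     *)
(* tuple b fills variables nx, nx+1, ... (only finitely many of them    *)
(* are free in phi, so these form the finite tuple y).                  *)

Definition inst {M : Type} (nx : nat) (a b : nat -> M) : nat -> M :=
  fun i => if Nat.ltb i nx then a i else b (i - nx).

(* {phi(x, b_s) : s in C} is consistent (for finite C: realized in M) *)
Definition consistent_in {L} (M : Structure L) (phi : formula L) (nx : nat)
    (b : path -> (nat -> M)) (C : pset) : Prop :=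
  exists a : nat -> M, forall s, C s -> sat M (inst nx a (b s)) phi.

Definition k_inconsistent_in {L} (M : Structure L) (phi : formula L) (nx : nat)
    (b : path -> (nat -> M)) (k : nat) (C : pset) : Prop :=
  forall S : list path, NoDup S -> length S = k -> (forall s, In s S -> C s) ->
    ~ consistent_in M phi nx b (fun s => In s S).

Definition weave {L} (M : Structure L) (phi : formula L) (nx : nat)
    (b : path -> (nat -> M)) (k : nat) (m n : natinf) : Prop :=
  (forall C, fin_up_comb m C -> k_inconsistent_in M phi nx b k C) /\
  (forall C, fin_right_comb n C -> consistent_in M phi nx b C).

Definition strong_weave {L} (M : Structure L) (phi : formula L) (nx : nat)
    (b : path -> (nat -> M)) (k : nat) (m n : natinf) : Prop :=
  weave M phi nx b k m n /\
  (forall C, fin_wide_right_comb n C -> consistent_in M phi nx b C).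

Definition has_weave {L} (T : formula L -> Prop) (phi : formula L) (nx : nat)
    (k : nat) (m n : natinf) : Prop :=
  exists (M : Structure L) (b : path -> (nat -> M)), is_model M T /\ weave M phi nx b k m n.

Definition has_strong_weave {L} (T : formula L -> Prop) (phi : formula L) (nx : nat)
    (k : nat) (m n : natinf) : Prop :=
  exists (M : Structure L) (b : path -> (nat -> M)), is_model M T /\ strong_weave M phi nx b k m n.

(* Main.v *)
Require Import Defs.
From Stdlib Require Import List Arith Lia FunctionalExtensionality.
Import ListNotations.

Definition fp (s : path) : path := fun p =>
  if Nat.odd p then (false, snd (s (Nat.div2 p))) else (fst (s (Nat.div2 p)), false).

Definition text (tau : node) : path := fun i => nth i tau (false, false).

Definition fnode (tau : node) : node := map (fp (text tau)) (seq 0 (2 * length tau)).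

Lemma fnode_len tau : length (fnode tau) = 2 * length tau.
Proof. unfold fnode. rewrite length_map, length_seq. reflexivity. Qed.

Lemma fnode_nth tau p : p < 2 * length tau -> nth p (fnode tau) (false,false) = fp (text tau) p.
Proof.
  intro H. unfold fnode.
  rewrite nth_indep with (d' := fp (text tau) 0) by (rewrite length_map, length_seq; lia).
  rewrite map_nth, seq_nth by lia. reflexivity.
Qed.

Lemma div2_lt p l : p < 2 * l -> Nat.div2 p < l.
Proof. intro H. pose proof (Nat.div2_odd p). destruct (Nat.odd p); simpl in *; lia. Qed.

Lemma fp_prefix s tau p :
  (forall i, i < length tau -> s i = nth i tau (false, false)) ->
  p < 2 * length tau -> fp s p = fp (text tau) p.
Proof.
  intros H Hp. unfold fp, text. rewrite (H (Nat.div2 p)) by (apply div2_lt; auto). reflexivity.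
Qed.

Lemma ext_i s tau a c : extends_cat s tau (a, c) -> extends_cat (fp s) (fnode tau) (a, false).
Proof.
  intros [H1 H2]. split.
  - intros i Hi. rewrite fnode_len in Hi. rewrite fnode_nth by auto. apply fp_prefix; auto.
  - rewrite fnode_len. unfold fp. rewrite Nat.odd_even, Nat.div2_double, H2. reflexivity.
Qed.

Lemma ext_ii s tau a c : extends_cat s tau (a, c) ->
  extends_cat (fp s) (fnode tau ++ [(a, false)]) (false, c).
Proof.
  intros [H1 H2]. split.
  - intros i Hi. rewrite length_app, fnode_len in Hi. simpl in Hi.
    destruct (Nat.lt_ge_cases i (2 * length tau)).
    + rewrite app_nth1 by (rewrite fnode_len; auto). rewrite fnode_nth by auto. apply fp_prefix; auto.
    + assert (i = 2 * length tau) by lia. subst.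
      rewrite app_nth2 by (rewrite fnode_len; lia). rewrite fnode_len, Nat.sub_diag.
      unfold fp. rewrite Nat.odd_even, Nat.div2_double, H2. reflexivity.
  - rewrite length_app, fnode_len. cbn [length]. replace (2 * length tau + 1) with (S (2 * length tau)) by lia.
    unfold fp. rewrite Nat.div2_succ_double, H2.
    replace (S (2 * length tau)) with (2 * length tau + 1) by lia. rewrite Nat.odd_odd. reflexivity.
Qed.

Definition img (C : pset) : pset := fun t => exists s, C s /\ t = fp s.

Lemma fp_inj s1 s2 : fp s1 = fp s2 -> s1 = s2.
Proof.
  intro H. extensionality i.
  pose proof (f_equal (fun g => g (2 * i)) H) as E1.
  pose proof (f_equal (fun g => g (2 * i + 1)) H) as E2. cbv beta in E1, E2.
  unfold fp in *. rewrite Nat.odd_even, Nat.div2_double in E1.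
  rewrite Nat.odd_odd in E2. replace (2 * i + 1) with (S (2 * i)) in E2 by lia.
  rewrite Nat.div2_succ_double in E2.
  destruct (s1 i), (s2 i). simpl in *. congruence.
Qed.

Lemma img_card A n : card_le A n -> card_le (img A) n.
Proof.
  destruct n; simpl; auto. intros [l [Hl H]]. exists (map fp l). split.
  - rewrite length_map; auto.
  - intros t [s [Hs ->]]. apply in_map. auto.
Qed.

Lemma img_single C s0 : same_set C (fun s => s = s0) -> same_set (img C) (fun s => s = fp s0).
Proof.
  intros H t. split.
  - intros [s [Hs ->]]. apply H in Hs. subst. reflexivity.
  - intros ->. exists s0. split; auto. apply H. reflexivity.
Qed.

Lemma img_union A B C : same_set C (fun s => A s \/ B s) ->
  same_set (img C) (fun s => img A s \/ img B s).
Proof.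
  intros H t. split.
  - intros [s [Hs ->]]. apply H in Hs. destruct Hs; [left|right]; exists s; auto.
  - intros [[s [Hs ->]]|[s [Hs ->]]]; exists s; split; auto; apply H; auto.
Qed.

Lemma img_below A B : narrowly_below A B -> narrowly_below (img A) (img B).
Proof.
  intros [tau [i [HA HB]]]. exists (fnode tau ++ [(i, false)]), false. split.
  - intros t [s [Hs ->]]. apply ext_ii with (a := i). auto.
  - intros t [s [Hs ->]]. apply ext_ii with (a := i). auto.
Qed.

Lemma img_left A B : narrowly_left A B -> narrowly_left (img A) (img B).
Proof.
  intros [tau [j [HA HB]]]. exists (fnode tau), false. split.
  - intros t [s [Hs ->]]. eapply ext_i. eauto.
  - intros t [s [Hs ->]]. eapply ext_i. eauto.
Qed.

Lemma img_wide A B : widely_left A B -> narrowly_left (img A) (img B).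
Proof.
  intros [tau [HA HB]]. exists (fnode tau), false. split.
  - intros t [s [Hs ->]]. destruct (HA s Hs); eapply ext_i; eauto.
  - intros t [s [Hs ->]]. destruct (HB s Hs); eapply ext_i; eauto.
Qed.

Lemma img_up m C : fin_up_comb m C -> fin_up_comb m (img C).
Proof.
  induction 1.
  - eapply upc_single. apply img_single; eauto.
  - eapply upc_join; [exact IHfin_up_comb1|exact IHfin_up_comb2|apply img_card; exact H1|apply img_below; exact H2|apply img_union; exact H3].
Qed.

Lemma img_right n C : fin_right_comb n C -> fin_right_comb n (img C).
Proof.
  induction 1.
  - eapply rc_single. apply img_single; eauto.
  - eapply rc_join; [exact IHfin_right_comb1|exact IHfin_right_comb2|apply img_card; exact H1|apply img_left; exact H2|apply img_union; exact H3].
Qed.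

Lemma img_wide_comb n C : fin_wide_right_comb n C -> fin_right_comb n (img C).
Proof.
  destruct 1.
  - eapply rc_single. apply img_single; eauto.
  - eapply rc_join; [apply img_right; exact H|apply img_right; exact H0|apply img_card; exact H1|apply img_wide; exact H2|apply img_union; exact H3].
Qed.

Lemma cons_back {L} (M : Structure L) phi nx (b : path -> nat -> M) C :
  consistent_in M phi nx b (img C) -> consistent_in M phi nx (fun s => b (fp s)) C.
Proof.
  intros [a Ha]. exists a. intros s Hs. apply Ha. exists s. auto.
Qed.

Lemma NoDup_map_fp S : NoDup S -> NoDup (map fp S).
Proof.
  induction 1; simpl; constructor; auto.
  intro Hin. apply in_map_iff in Hin. destruct Hin as [y [Hy Hin]].
  apply fp_inj in Hy. subst. auto.
Qed.

Theorem proposition1p6 (L : Language) (T : formula L -> Prop)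
  (HT : complete_theory T) (phi : formula L) (nx : nat)
  (k : nat) (m n : natinf) :
  has_weave T phi nx k m n <-> has_strong_weave T phi nx k m n.
Proof.
  split.
  - intros [M [b [HM [Hup Hr]]]]. exists M, (fun s => b (fp s)). split; auto.
    assert (Hr' : forall C, fin_right_comb n C -> consistent_in M phi nx (fun s => b (fp s)) C).
    { intros C HC. apply cons_back. apply Hr. apply img_right. auto. }
    split; [split|].
    + intros C HC S HN HL HS [a Ha].
      apply (Hup (img C) (img_up _ _ HC) (map fp S)).
      * apply NoDup_map_fp; auto.
      * rewrite length_map; auto.
      * intros t Ht. apply in_map_iff in Ht. destruct Ht as [s [<- Hs]]. exists s; auto.
      * exists a. intros t Ht. apply in_map_iff in Ht. destruct Ht as [s [<- Hs]]. apply Ha. auto.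
    + exact Hr'.
    + intros C HC. apply cons_back. apply Hr. apply img_wide_comb. auto.
  - intros [M [b [HM [Hw _]]]]. exists M, b. auto.
Qed.
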